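(* In the four-price Devil's Menu described in the context (with $2\varepsilon<\delta\le V-\varepsilon$), let $$\bar B=\max_{S \subseteq \{1,\ldots,\bar{k}\},\ |S|=q} \left[ (V+\varepsilon) \sum_{k\in S} n^R_k+ \delta \sum_{k\in S} n^D_k + 2\varepsilon \sum_{k\notin S}n^D_k \right].$$ Starting from the profile in which every real voter applies for $s_1$ and every decoy voter applies for $s_2$, suppose exactly one decoy voter deviates and applies for $s_1$. Then, for every realization of the random selection, the adversary's total expenditure is at most $\bar B$.
   Context: There is a finite set $N$ of citizens partitioned into $\bar k>1$ districts $N_1,\dots,N_{\bar k}$; district $N_k$ contains $n_k^R\ge1$ real voters and $n_k^D$ decoy voters, $n_k=n_k^R+n_k^D>1$. Real voters value their ballot at $V>0$, decoy voters at $0$. Fix $1\le q\le\bar k-1$ and $\varepsilon>0$. Each citizen applies for slot $s_1$ or $s_2$. For district $k$ let $m_k$ be the number of $s_1$-applicants and $\rho_k=m_k/n_k^R$; let $\rho$ be the $q$-th smallest of $\rho_1,\dots,\rho_{\bar k}$, $C=\{k:\rho_k<\rho\}$, $T=\{k:\rho_k=\rho\}$, $c=|C|$, $t=|T|$. Districts in $C$ are selected and $q-c$ districts of $T$ are selected uniformly at random; the rest are non-selected. Prices offered: $s_1$ in a selected district $V+\varepsilon$; $s_2$ in a selected district $\delta$; $s_1$ in a non-selected district $\varepsilon$; $s_2$ in a non-selected district $2\varepsilon$. Each applicant sells his ballot iff the price strictly exceeds his valuation, and the adversary must pay the price for every ballot sold; the adversary's expenditure is the sum of these payments. *)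

(* Defs.v *)
From mathcomp Require Import all_boot all_order all_algebra.
Set Implicit Arguments. Unset Strict Implicit. Unset Printing Implicit Defensive.
Import Order.TTheory GRing.Theory Num.Theory.
Local Open Scope ring_scope.

(* A profile [sigma : N -> bool] gives the slot applied for:
   true = s1, false = s2. *)
Section DevilsMenu.
Variables (R : realFieldType) (N : finType) (K : nat)
  (dist : N -> 'I_K) (real : pred N).

Definition nR (k : 'I_K) : nat := #|[set i | (dist i == k) && real i]|.
Definition nD (k : 'I_K) : nat := #|[set i | (dist i == k) && ~~ real i]|.

Definition m1 (sigma : N -> bool) (k : 'I_K) : nat :=
  #|[set i | (dist i == k) && sigma i]|.

Definition rho (sigma : N -> bool) (k : 'I_K) : R :=
  (m1 sigma k)%:R / (nR k)%:R.

Definition rho_q (sigma : N -> bool) (q : nat) : R :=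
  nth 0 (sort <=%R [seq rho sigma k | k <- enum 'I_K]) q.-1.

Definition Cset (sigma : N -> bool) (q : nat) : {set 'I_K} :=
  [set k | rho sigma k < rho_q sigma q].
Definition Tset (sigma : N -> bool) (q : nat) : {set 'I_K} :=
  [set k | rho sigma k == rho_q sigma q].

(* S is a possible realization of the selected set: all of C plus
   q - c districts of T. *)
Definition realization (sigma : N -> bool) (q : nat) (S : {set 'I_K}) : bool :=
  [&& Cset sigma q \subset S,
      S \subset Cset sigma q :|: Tset sigma q & #|S| == q].

(* price offered: selected?, slot (true = s1) *)
Definition price (V eps delta : R) (selected slot : bool) : R :=
  if selected then (if slot then V + eps else delta)
  else (if slot then eps else 2 * eps).

Definition valuation (V : R) (i : N) : R := if real i then V else 0.

Definition expenditure (V eps delta : R) (sigma : N -> bool)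
    (S : {set 'I_K}) : R :=
  \sum_(i : N | valuation V i < price V eps delta (dist i \in S) (sigma i))
     price V eps delta (dist i \in S) (sigma i).

(* \bar B; all terms are nonnegative, so 0 is a harmless neutral element *)
Definition Bbar (V eps delta : R) (q : nat) : R :=
  \big[Num.max/0]_(S : {set 'I_K} | #|S| == q)
    ((V + eps) * (\sum_(k in S) (nR k)%:R)
     + delta * (\sum_(k in S) (nD k)%:R)
     + 2 * eps * (\sum_(k in ~: S) (nD k)%:R)).

End DevilsMenu.

(* Main.v *)
Require Import Defs.
From mathcomp Require Import all_boot all_order all_algebra.
From mathcomp Require Import zify ring lra.
Import Order.TTheory GRing.Theory Num.Theory.
Local Open Scope ring_scope.

Lemma sum_card_helper (R : realFieldType) (N : finType) (K : nat)
  (dist : N -> 'I_K) (P : pred N) (A : {set 'I_K}) :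
  \sum_(k in A) (#|[set i | (dist i == k) && P i]|)%:R
   = \sum_(i | (dist i \in A) && P i) (1:R).
Proof.
rewrite (partition_big dist (mem A)) /=; last by move=> i /andP[].
apply: eq_bigr => k kA; rewrite -sum1_card natr_sum.
apply: eq_big => // i; rewrite inE.
case: (eqVneq (dist i) k) => [->|_]; first by rewrite kA andbT.
by rewrite andbF.
Qed.

Theorem corollary1 (R : realFieldType) (N : finType) (K : nat)
    (dist : N -> 'I_K) (real : pred N) (V eps delta : R) (q : nat) (d : N) :
  (1 < K)%N ->
  (forall k : 'I_K, (1 <= nR dist real k)%N) ->
  (forall k : 'I_K, (1 < #|[set i | dist i == k]|)%N) ->
  0 < V -> 0 < eps -> 2 * eps < delta -> delta <= V - eps ->
  (1 <= q)%N -> (q <= K - 1)%N ->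
  ~~ real d ->
  let sigma := fun i : N => real i || (i == d) in
  forall S : {set 'I_K},
    @realization R N K dist real sigma q S ->
    @expenditure R N K dist real V eps delta sigma S <= @Bbar R N K dist real V eps delta q.
Proof.
move=> K1 nR1 _ V0 e0 ed dV q1 qK rd sigma S /and3P[CS ST /eqP cS].
set dd := dist d.
have m1k : forall k, k != dd -> m1 dist sigma k = nR dist real k.
  move=> k kd; rewrite /m1 /nR; apply: eq_card => i; rewrite !inE /sigma.
  case: (eqVneq (dist i) k) => [ek|]; last by [].
case: (eqVneq i d) => [ei|]; last by rewrite orbF.
by move: kd; rewrite -ek ei eqxx.
have m1d : m1 dist sigma dd = (nR dist real dd).+1.
  rewrite /m1 /nR.
  have -> : [set i | (dist i == dd) && sigma i]
      = d |: [set i | (dist i == dd) && real i].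
    apply/setP => i; rewrite !inE /sigma.
    case: (eqVneq i d) => [->|_]; first by rewrite !eqxx ?orbT.
    by rewrite orbF.
  by rewrite cardsU1 inE (negbTE rd) andbF.
have rhok : forall k, k != dd -> rho R dist real sigma k < rho R dist real sigma dd.
  move=> k kd; rewrite /rho m1k // m1d.
  have p1 : (0:R) < (nR dist real k)%:R by rewrite ltr0n nR1.
  have p2 : (0:R) < (nR dist real dd)%:R by rewrite ltr0n nR1.
  rewrite divff ?gt_eqF // ltr_pdivlMr // mul1r ltr_nat //.
have ddS : dd \notin S.
  apply/negP => ddS.
  have : (dd \in Cset R dist real sigma q :|: Tset R dist real sigma q)
    by apply: (subsetP ST).
  rewrite !inE => hd.
  have hle : rho R dist real sigma dd <= rho_q R dist real sigma q.
    by case/orP: hd => [/ltW|/eqP ->].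
  have : S = setT.
    apply/setP => k; rewrite inE.
    case: (eqVneq k dd) => [->//|kd].
    apply: (subsetP CS); rewrite inE.
    exact: lt_le_trans (rhok _ kd) hle.
  move=> St; move: cS; rewrite St cardsT card_ord => eK.
  move: qK K1; rewrite -eK; lia.
have eV : eps < V.
  have : 2 * eps < V - eps := lt_le_trans ed dV. lra.
apply: le_trans (_ : _ <= (V + eps) * (\sum_(k in S) (nR dist real k)%:R)
     + delta * (\sum_(k in S) (nD dist real k)%:R)
     + 2 * eps * (\sum_(k in ~: S) (nD dist real k)%:R)) _; last first.
  by apply: (le_bigmax_cond _ (fun S0 : {set 'I_K} => (V + eps) * (\sum_(k in S0) (nR dist real k)%:R)
     + delta * (\sum_(k in S0) (nD dist real k)%:R)
     + 2 * eps * (\sum_(k in ~: S0) (nD dist real k)%:R))); rewrite cS.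
rewrite /nR /nD !sum_card_helper !mulr_sumr /expenditure big_mkcond /=.
rewrite (big_mkcond (fun i => (dist i \in S) && real i)).
rewrite (big_mkcond (fun i => (dist i \in S) && ~~ real i)).
rewrite (big_mkcond (fun i => (dist i \in ~: S) && ~~ real i)) -!big_split /=.
apply: ler_sum => i _.
rewrite /valuation /price /sigma inE.
case: (eqVneq i d) => [->|ne].
  rewrite (negbTE ddS) (negbTE rd) orbT /= e0; lra.
rewrite orbF; case: (real i); case: (dist i \in S) => /=.
- rewrite ltrDl e0; lra.
- rewrite ltNge (ltW eV) /=; lra.
- rewrite (lt_trans _ ed) ?mulr_gt0 //; lra.
- rewrite mulr_gt0 //; lra.
Qed.
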